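(* With $\varepsilon,N,q,P_{(0)},d$ as in the context, assume $4d^2<1$ and put $w_\pm=\frac{-1\pm\sqrt{1-4d^2}}{2d^2}$. Then $\hat R(w_\pm)=I+w_\pm P_{(0)}$ satisfy the braid equation $$\hat R_{12}(w_\pm)\hat R_{23}(w_\pm)\hat R_{12}(w_\pm)=\hat R_{23}(w_\pm)\hat R_{12}(w_\pm)\hat R_{23}(w_\pm),$$ and $\hat R(w_+)\hat R(w_-)=I$. Moreover, for every $w\in\mathbb C$, $\hat R(w)=\frac{(w-w_-)\hat R(w_+)-(w-w_+)\hat R(w_-)}{w_+-w_-}$.
   Context: Let $\varepsilon\in\{1,-1\}$, $N\ge 2$ (with $N=2n$ even if $\varepsilon=-1$), $q>0$, $[x]=(q^x-q^{-x})/(q-q^{-1})$ ($[x]=x$ if $q=1$). Define $\rho=(n-\tfrac12,\dots,\tfrac12,0,-\tfrac12,\dots,-n+\tfrac12)$ if $\varepsilon=1,N=2n+1$; $\rho=(n-1,\dots,1,0,0,-1,\dots,-n+1)$ if $\varepsilon=1,N=2n$; $\rho=(n,\dots,1,-1,\dots,-n)$ if $\varepsilon=-1,N=2n$. Let $\epsilon_i=1$ for all $i$ if $\varepsilon=1$; $\epsilon_i=1$ for $i\le n$ and $-1$ for $i>n$ if $\varepsilon=-1$. With $i'=N+1-i$ and matrix units $E_{ij}$, $P_{(0)}=(1+\varepsilon[N-\varepsilon])^{-1}\sum_{i,j}q^{\rho_i-\rho_j}\epsilon_i\epsilon_jE_{i',j}\otimes E_{i,j'}$ on $\mathbb C^N\otimes\mathbb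 C^N$; $1+\varepsilon[N-\varepsilon]\neq0$ is assumed and $d=(1+\varepsilon[N-\varepsilon])^{-1}$. $\hat R(w)=I+wP_{(0)}$; $A_{12}=A\otimes I$, $A_{23}=I\otimes A$. *)

(* Defs.v *)
From mathcomp Require Import all_boot all_order all_algebra.
From mathcomp Require Import zify.
Set Implicit Arguments. Unset Strict Implicit. Unset Printing Implicit Defensive.
Import Order.TTheory GRing.Theory Num.Theory.
Local Open Scope ring_scope.

Lemma pidx_proof m n (a : 'I_m) (b : 'I_n) : (a * n + b < m * n)%N.
Proof.
have ha := ltn_ord a; have hb := ltn_ord b.
have : (a.+1 * n <= m * n)%N by rewrite leq_mul2r ha orbT.
rewrite mulSn; lia.
Qed.

Definition pidx m n (a : 'I_m) (b : 'I_n) : 'I_(m * n) := Ordinal (pidx_proof a b).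

(* Kronecker (tensor) product of matrices, w.r.t. the row-major identification
   C^m (x) C^p = C^(m*p) given by pidx. *)
Definition kron (R : pzRingType) m n p r (A : 'M[R]_(m, n)) (B : 'M[R]_(p, r))
  : 'M[R]_(m * p, n * r) :=
  \matrix_(i, j) \sum_(a < m) \sum_(b < p) \sum_(c < n) \sum_(e < r)
     (if (pidx a b == i) && (pidx c e == j) then A a c * B b e else 0).

(* A_{12} = A (x) I and A_{23} = I (x) A on C^N (x) C^N (x) C^N,
   both viewed as N*N*N square matrices (associativity of the flattening). *)
Definition op12 (R : pzRingType) N (A : 'M[R]_(N * N)) : 'M[R]_(N * N * N) :=
  kron A (1%:M : 'M[R]_N).
Definition op23 (R : pzRingType) N (A : 'M[R]_(N * N)) : 'M[R]_(N * N * N) :=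
  castmx (mulnA N N N, mulnA N N N) (kron (1%:M : 'M[R]_N) A).

Definition qnum (C : numFieldType) (q : C) (x : int) : C :=
  if q == 1 then x%:~R else (q ^ x - q ^ (- x)) / (q - q^-1).

(* twice rho_i, for the 1-based index i (1 <= i <= N); n = N./2 *)
Definition rho2 (eps : int) (N : nat) (i : nat) : int :=
  let n := N./2 in
  if eps == 1 then
    if odd N then
      (if (i <= n)%N then (2 * n + 1)%:Z - (2 * i)%:Z
       else if i == n.+1 then 0
       else (2 * n + 3)%:Z - (2 * i)%:Z)
    else
      (if (i <= n)%N then (2 * n)%:Z - (2 * i)%:Z else (2 * n + 2)%:Z - (2 * i)%:Z)
  else
    (if (i <= n)%N then (2 * n + 2)%:Z - (2 * i)%:Z else (2 * n)%:Z - (2 * i)%:Z).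

(* epsilon_i for the 1-based index i *)
Definition epsi (eps : int) (N : nat) (i : nat) : int :=
  if eps == 1 then 1 else if (i <= N./2)%N then 1 else -1.

(* q^(rho_i - rho_j) = (sqrt q)^(2 rho_i - 2 rho_j), for q > 0; indices 0-based *)
Definition qrho (C : numClosedFieldType) (q : C) eps N (i j : 'I_N) : C :=
  (sqrtC q) ^ (rho2 eps N i.+1 - rho2 eps N j.+1).

Definition dcoef (C : numClosedFieldType) (q : C) (eps : int) (N : nat) : C :=
  (1 + eps%:~R * qnum q (N%:Z - eps))^-1.

(* P_(0) = d * sum_{i,j} q^(rho_i - rho_j) eps_i eps_j E_{i',j} (x) E_{i,j'} ;
   i' = N+1-i is rev_ord i in 0-based indexing. *)
Definition P0 (C : numClosedFieldType) (q : C) (eps : int) (N : nat) : 'M[C]_(N * N) :=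
  dcoef q eps N *: \sum_(i < N) \sum_(j < N)
     ((@qrho C q eps N i j * (epsi eps N i.+1)%:~R * (epsi eps N j.+1)%:~R)
        *: kron (delta_mx (rev_ord i) j : 'M[C]_N) (delta_mx i (rev_ord j) : 'M[C]_N)).

Definition Rhat (C : numClosedFieldType) (q : C) (eps : int) (N : nat) (w : C)
  : 'M[C]_(N * N) := 1%:M + w *: P0 q eps N.

(* Main.v *)
Require Import Defs.
From mathcomp Require Import all_boot all_order all_algebra.
From mathcomp Require Import zify ring.
Import Order.TTheory GRing.Theory Num.Theory.
Set Implicit Arguments. Unset Strict Implicit. Unset Printing Implicit Defensive.
Local Open Scope ring_scope.

Lemma pidx_eq m n (a c : 'I_m) (b e : 'I_n) :
  (pidx a b == pidx c e) = (a == c) && (b == e).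
Proof.
apply/eqP/andP => [/(congr1 val) /= H | [/eqP -> /eqP ->] //].
have hb := ltn_ord b; have he := ltn_ord e.
have hac : (a : nat) = c by nia.
split; apply/eqP/val_inj => //=; lia.
Qed.

Lemma ltn_divo m n (k : 'I_(m * n.+1)) : (k %/ n.+1 < m)%N.
Proof. by rewrite ltn_divLR // ltn_ord. Qed.

Definition pinv m n (k : 'I_(m * n.+1)) : 'I_m * 'I_n.+1 :=
  (Ordinal (ltn_divo k), Ordinal (ltn_pmod k (ltn0Sn n))).

Lemma sum_pidx (R : nmodType) m n (F : 'I_(m * n) -> R) :
  \sum_(k < m * n) F k = \sum_(a < m) \sum_(b < n) F (pidx a b).
Proof.
case: n F => [|n] F.
  rewrite big1; last by move=> k; have := ltn_ord k; lia.
  by rewrite big1 // => a _; rewrite big_ord0.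
rewrite pair_big /=.
rewrite (reindex (fun p : 'I_m * 'I_n.+1 => pidx p.1 p.2)) //.
exists (@pinv m n).
  move=> [a b] _; rewrite /pinv; congr (_, _); apply: val_inj => /=.
    by rewrite divnMDl // divn_small // addn0.
  by rewrite modnMDl modn_small.
move=> k _; apply: val_inj => /=; by rewrite -divn_eq.
Qed.

Lemma pidx_surj m n (k : 'I_(m * n)) : exists a b, k = pidx a b.
Proof.
case: n k => [|n] k; first by have := ltn_ord k; lia.
exists (pinv k).1, (pinv k).2; apply: val_inj => /=; by rewrite -divn_eq.
Qed.

Lemma mx2P (R : Type) m n p r (A B : 'M[R]_(m * n, p * r)) :
  (forall a b c e, A (pidx a b) (pidx c e) = B (pidx a b) (pidx c e)) -> A = B.
Proof.
move=> H; apply/matrixP => i j.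
by case: (pidx_surj i) => a [b ->]; case: (pidx_surj j) => c [e ->].
Qed.

Lemma sum_if (R : nmodType) n (x : 'I_n) (F : 'I_n -> R) :
  \sum_(i < n) (if i == x then F i else 0) = F x.
Proof. by rewrite -big_mkcond big_pred1_eq. Qed.

Lemma kronE (R : pzRingType) m n p r (A : 'M[R]_(m, n)) (B : 'M[R]_(p, r)) a b c e :
  kron A B (pidx a b) (pidx c e) = A a c * B b e.
Proof.
rewrite mxE (bigD1 a) //= [X in _ + X]big1 ?addr0 => [|a' ha]; last first.
  by rewrite big1 // => b' _; rewrite big1 // => c' _; rewrite big1 // => e' _;
     rewrite pidx_eq (negbTE ha).
rewrite (bigD1 b) //= [X in _ + X]big1 ?addr0 => [|b' hb]; last first.
  by rewrite big1 // => c' _; rewrite big1 // => e' _;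
     rewrite pidx_eq eqxx (negbTE hb).
rewrite (bigD1 c) //= [X in _ + X]big1 ?addr0 => [|c' hc]; last first.
  by rewrite big1 // => e' _; rewrite !pidx_eq !eqxx (negbTE hc).
rewrite (bigD1 e) //= [X in _ + X]big1 ?addr0 => [|e' he]; last first.
  by rewrite !pidx_eq !eqxx (negbTE he).
by rewrite !pidx_eq !eqxx.
Qed.

Lemma op12E (R : pzRingType) N (A : 'M[R]_(N * N)) a b c a' b' c' :
  op12 A (pidx (pidx a b) c) (pidx (pidx a' b') c') =
  A (pidx a b) (pidx a' b') * (c == c')%:R.
Proof. by rewrite /op12 kronE mxE. Qed.

Lemma cast_pidx N (a b c : 'I_N) :
  cast_ord (esym (mulnA N N N)) (pidx (pidx a b) c) = pidx a (pidx b c).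
Proof. by apply: val_inj => /=; rewrite mulnDl -mulnA addnA. Qed.

Lemma op23E (R : pzRingType) N (A : 'M[R]_(N * N)) a b c a' b' c' :
  op23 A (pidx (pidx a b) c) (pidx (pidx a' b') c') =
  (a == a')%:R * A (pidx b c) (pidx b' c').
Proof. by rewrite /op23 castmxE !cast_pidx kronE mxE. Qed.

Definition fco (C : numClosedFieldType) (q : C) eps N (i j : 'I_N) : C :=
  @qrho C q eps N i j * (epsi eps N i.+1)%:~R * (epsi eps N j.+1)%:~R.

Lemma P0E (C : numClosedFieldType) (q : C) eps N a b c e :
  P0 q eps N (pidx a b) (pidx c e) =
  dcoef q eps N * ((a == rev_ord b)%:R * (e == rev_ord c)%:R * fco q eps b c).
Proof.
rewrite /P0 mxE summxE; congr (_ * _).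
rewrite (bigD1 b) //= [X in _ + X]big1 ?addr0 => [|i hi]; last first.
  rewrite summxE big1 // => j _.
  rewrite mxE kronE !mxE [b == i]eq_sym (negbTE hi) /=; by rewrite !(mulr0, mul0r).
rewrite summxE (bigD1 c) //= [X in _ + X]big1 ?addr0 => [|j hj]; last first.
  rewrite mxE kronE !mxE [c == j]eq_sym (negbTE hj) andbF /=; by rewrite !(mulr0, mul0r).
rewrite mxE kronE !mxE !eqxx !andbT /fco.
ring.
Qed.

Lemma sum_delta (R : pzSemiRingType) n (x : 'I_n) (G : 'I_n -> R) :
  \sum_(i < n) (i == x)%:R * G i = G x.
Proof.
rewrite -[RHS](sum_if x); apply: eq_bigr => i _.
by case: eqP => _; rewrite ?mul1r ?mul0r.
Qed.

Section Fco.
Variables (C : numClosedFieldType) (q : C) (eps : int) (N : nat).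
Hypothesis q0 : 0 < q.

Lemma sqrt_neq0 : sqrtC q != 0.
Proof. by rewrite sqrtC_eq0 gt_eqF. Qed.

Lemma fco_mul (x y z w : 'I_N) :
  fco q eps x y * fco q eps z w = fco q eps x w * fco q eps z y.
Proof.
rewrite /fco /qrho.
set s := sqrtC q.
have h : s ^ (rho2 eps N x.+1 - rho2 eps N y.+1) * s ^ (rho2 eps N z.+1 - rho2 eps N w.+1)
  = s ^ (rho2 eps N x.+1 - rho2 eps N w.+1) * s ^ (rho2 eps N z.+1 - rho2 eps N y.+1).
  rewrite -!expfzDr ?sqrt_neq0 //; congr (_ ^ _); ring.
transitivity (s ^ (rho2 eps N x.+1 - rho2 eps N y.+1) * s ^ (rho2 eps N z.+1 - rho2 eps N w.+1)
   * ((epsi eps N x.+1)%:~R * (epsi eps N y.+1)%:~R * (epsi eps N z.+1)%:~R * (epsi eps N w.+1)%:~R)).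
  ring.
rewrite h; ring.
Qed.

Lemma epsi_sq i : (epsi eps N i)%:~R * (epsi eps N i)%:~R = 1 :> C.
Proof. by rewrite /epsi; case: ifP => _; [|case: ifP => _]; rewrite ?mulr1 ?mulrNN ?mulr1 // mulN1r opprK. Qed.

Lemma fco_diag (x : 'I_N) : fco q eps x x = 1.
Proof. by rewrite /fco /qrho subrr expr0z mul1r epsi_sq. Qed.

End Fco.

Section Mat.
Variables (C : numClosedFieldType) (q : C) (eps : int) (N : nat).
Hypothesis q0 : 0 < q.
Local Notation P := (P0 q eps N).
Local Notation d := (dcoef q eps N).
Local Notation f := (@fco C q eps N).
Definition tsum := \sum_(g < N) f (rev_ord g) g.

Lemma PP : P *m P = (d * tsum) *: P.
Proof.
apply: mx2P => a b c e.
rewrite mxE sum_pidx mxE P0E.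
transitivity (\sum_(g < N) \sum_(h < N) (h == rev_ord g)%:R *
   (d * d * (a == rev_ord b)%:R * (e == rev_ord c)%:R * f b g * (g == rev_ord h)%:R * f h c)).
  by apply: eq_bigr => g _; apply: eq_bigr => h _; rewrite !P0E; ring.
under eq_bigr => g _ do rewrite sum_delta rev_ordK eqxx mulr1 -mulrA (@fco_mul _ q eps N q0).
rewrite /tsum mulr_sumr mulr_suml; apply: eq_bigr => g _; ring.
Qed.
End Mat.

Lemma mx3P (R : Type) N (A B : 'M[R]_(N * N * N)) :
  (forall a b c a' b' c', A (pidx (pidx a b) c) (pidx (pidx a' b') c') =
     B (pidx (pidx a b) c) (pidx (pidx a' b') c')) -> A = B.
Proof.
move=> H; apply: mx2P => i c j c'.
by case: (pidx_surj i) => a [b ->]; case: (pidx_surj j) => a' [b' ->].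
Qed.

Lemma sum_pidx3 (R : nmodType) N (F : 'I_(N * N * N) -> R) :
  \sum_(k < N * N * N) F k =
  \sum_(g < N) \sum_(h < N) \sum_(k < N) F (pidx (pidx g h) k).
Proof. by rewrite sum_pidx sum_pidx. Qed.

Lemma rev_sym n (x y : 'I_n) : (x == rev_ord y) = (y == rev_ord x).
Proof. by apply/eqP/eqP => ->; rewrite rev_ordK. Qed.

Lemma rev_eq n (x y : 'I_n) : (rev_ord x == rev_ord y) = (x == y).
Proof. exact: (inj_eq (@rev_ord_inj n)). Qed.

Section Mat2.
Variables (C : numClosedFieldType) (q : C) (eps : int) (N : nat).
Hypothesis q0 : 0 < q.
Local Notation P := (P0 q eps N).
Local Notation d := (dcoef q eps N).
Local Notation f := (@fco C q eps N).

Lemma E12_23 a b c x y z :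
  (op12 P *m op23 P) (pidx (pidx a b) c) (pidx (pidx x y) z) =
  d * d * (a == rev_ord b)%:R * (x == c)%:R * (z == rev_ord y)%:R * f b x * f c y.
Proof.
rewrite mxE sum_pidx3.
transitivity (\sum_(g < N) \sum_(h < N) \sum_(k < N) (k == c)%:R * ((h == rev_ord g)%:R *
   ((g == x)%:R * (d * d * (a == rev_ord b)%:R * f b g * (h == rev_ord k)%:R
      * (z == rev_ord y)%:R * f k y)))).
  apply: eq_bigr => g _; apply: eq_bigr => h _; apply: eq_bigr => k _.
  rewrite op12E op23E !P0E [c == k]eq_sym; ring.
under eq_bigr => g _ do under eq_bigr => h _ do rewrite sum_delta.
under eq_bigr => g _ do rewrite sum_delta.
rewrite sum_delta rev_eq; ring.
Qed.

Lemma f3 (b c a' : 'I_N) : f b c * f c (rev_ord c) * f (rev_ord c) a' = f b a'.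
Proof.
rewrite mulrAC (@fco_mul _ q eps N q0 b c (rev_ord c) a') -mulrA.
rewrite (@fco_mul _ q eps N q0 (rev_ord c) c c (rev_ord c)) !(@fco_diag _ q eps N) mulr1 mulr1 //.
Qed.

Lemma TL1 : op12 P *m op23 P *m op12 P = (d * d) *: op12 P.
Proof.
apply: mx3P => a b c a' b' c'.
rewrite mxE sum_pidx3 mxE op12E P0E.
transitivity (\sum_(x < N) \sum_(y < N) \sum_(z < N) (z == c')%:R * ((y == rev_ord x)%:R *
   ((x == c)%:R * (d * d * d * (a == rev_ord b)%:R * (z == rev_ord y)%:R *
     (b' == rev_ord a')%:R * f b x * f c y * f y a')))).
  apply: eq_bigr => x _; apply: eq_bigr => y _; apply: eq_bigr => z _.
  rewrite E12_23 op12E P0E [x == rev_ord y]rev_sym; ring.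
under eq_bigr => x _ do under eq_bigr => y _ do rewrite sum_delta.
under eq_bigr => x _ do rewrite sum_delta.
rewrite sum_delta rev_ordK [c' == c]eq_sym.
rewrite -(f3 b c a'); ring.
Qed.

Lemma E23_12 a b c x y z :
  (op23 P *m op12 P) (pidx (pidx a b) c) (pidx (pidx x y) z) =
  d * d * (b == rev_ord c)%:R * (a == z)%:R * (y == rev_ord x)%:R
    * f c (rev_ord z) * f (rev_ord z) x.
Proof.
rewrite mxE sum_pidx3.
transitivity (\sum_(g < N) \sum_(h < N) \sum_(k < N) (k == z)%:R * ((h == rev_ord k)%:R *
   ((g == a)%:R * (d * d * (b == rev_ord c)%:R * f c h * (g == rev_ord h)%:R
      * (y == rev_ord x)%:R * f h x)))).
  apply: eq_bigr => g _; apply: eq_bigr => h _; apply: eq_bigr => k _.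
  rewrite op12E op23E !P0E [a == g]eq_sym [k == rev_ord h]rev_sym; ring.
under eq_bigr => g _ do under eq_bigr => h _ do rewrite sum_delta.
under eq_bigr => g _ do rewrite sum_delta.
rewrite sum_delta rev_ordK; ring.
Qed.

Lemma f3' (a c b' : 'I_N) : f c (rev_ord a) * f (rev_ord a) a * f a b' = f c b'.
Proof.
rewrite -mulrA [f (rev_ord a) a * _]mulrC mulrA.
rewrite (@fco_mul _ q eps N q0 c (rev_ord a) a b') -mulrA.
rewrite (@fco_mul _ q eps N q0 a (rev_ord a) (rev_ord a) a) !(@fco_diag _ q eps N).
by rewrite !mulr1.
Qed.

Lemma TL2 : op23 P *m op12 P *m op23 P = (d * d) *: op23 P.
Proof.
apply: mx3P => a b c a' b' c'.
rewrite mxE sum_pidx3 mxE op23E P0E.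
transitivity (\sum_(x < N) \sum_(y < N) \sum_(z < N) (z == a)%:R * ((y == rev_ord x)%:R *
   ((x == a')%:R * (d * d * d * (b == rev_ord c)%:R * (y == rev_ord z)%:R *
     (c' == rev_ord b')%:R * f c (rev_ord z) * f (rev_ord z) x * f z b')))).
  apply: eq_bigr => x _; apply: eq_bigr => y _; apply: eq_bigr => z _.
  rewrite E23_12 op23E P0E [a == z]eq_sym; ring.
under eq_bigr => x _ do under eq_bigr => y _ do rewrite sum_delta.
under eq_bigr => x _ do rewrite sum_delta.
rewrite sum_delta rev_eq.
case: (eqVneq a' a) => [->|ne].
  rewrite ?eqxx -(f3' a c b'); ring.
by rewrite !(mulr0, mul0r).
Qed.
End Mat2.

Lemma andR (R : pzSemiRingType) (x y : bool) : ((x && y)%:R : R) = x%:R * y%:R.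
Proof. by case: x; case: y; rewrite ?mulr1 ?mulr0. Qed.

Section OpAlg.
Variables (R : comPzRingType) (N : nat).

Lemma op12M (A B : 'M[R]_(N * N)) : op12 (A *m B) = op12 A *m op12 B.
Proof.
apply: mx3P => a b c a' b' c'.
rewrite op12E !mxE sum_pidx sum_pidx3 mulr_suml; apply: eq_bigr => g _.
rewrite mulr_suml; apply: eq_bigr => h _.
transitivity (\sum_(k < N) (k == c)%:R * (A (pidx a b) (pidx g h) * B (pidx g h) (pidx a' b') * (k == c')%:R)).
  by rewrite sum_delta.
by apply: eq_bigr => k _; rewrite !op12E [c == k]eq_sym; ring.
Qed.

Lemma op23M (A B : 'M[R]_(N * N)) : op23 (A *m B) = op23 A *m op23 B.
Proof.
apply: mx3P => a b c a' b' c'.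
rewrite op23E !mxE sum_pidx sum_pidx3 mulr_sumr.
transitivity (\sum_(g < N) (g == a)%:R * \sum_(h < N) \sum_(k < N) ((g == a')%:R *
   A (pidx b c) (pidx h k) * B (pidx h k) (pidx b' c'))).
  rewrite sum_delta; apply: eq_bigr => h _; rewrite mulr_sumr; apply: eq_bigr => k _; ring.
apply: eq_bigr => g _; rewrite mulr_sumr; apply: eq_bigr => h _; rewrite mulr_sumr.
by apply: eq_bigr => k _; rewrite !op23E [a == g]eq_sym; ring.
Qed.

Lemma entryL m (w : R) (A : 'M[R]_m) i j : (1%:M + w *: A) i j = (i == j)%:R + w * A i j.
Proof. by rewrite !mxE. Qed.

Lemma op12L (w : R) (A : 'M[R]_(N * N)) : op12 (1%:M + w *: A) = 1%:M + w *: op12 A.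
Proof.
apply: mx3P => a b c a' b' c'.
by rewrite op12E !entryL op12E !pidx_eq !andR; ring.
Qed.

Lemma op23L (w : R) (A : 'M[R]_(N * N)) : op23 (1%:M + w *: A) = 1%:M + w *: op23 A.
Proof.
apply: mx3P => a b c a' b' c'.
by rewrite op23E !entryL op23E !pidx_eq !andR; ring.
Qed.
End OpAlg.

Lemma braid_half (R : comPzRingType) m (X Y : 'M[R]_m) (w k : R) :
  X *m X = X -> X *m Y *m X = k *: X -> w * w * w * k + w + w * w = 0 ->
  (1%:M + w *: X) *m (1%:M + w *: Y) *m (1%:M + w *: X)
  = 1%:M + w *: (X + Y) + (w * w) *: (X *m Y + Y *m X).
Proof.
move=> hXX hXYX hw.
do 3 rewrite ?mulmxDl ?mulmxDr ?mul1mx ?mulmx1 -?scalemxAl -?scalemxAr ?scalerA.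
rewrite hXX hXYX ?scalerA.
move: (X *m Y) (Y *m X) => XY YX.
apply/matrixP => i j; rewrite !mxE.
apply/eqP; rewrite -subr_eq0; apply/eqP.
rewrite -(mulr0 (X i j)) -hw; ring.
Qed.

Lemma geoE (C : fieldType) (s : C) (a b : nat) (K e1 e2 : int) (F : nat -> C) :
  s != 0 -> (a <= b)%N ->
  (forall i, (a <= i < b)%N -> F i = s ^ (4 * i%:Z - K)) ->
  e1 = 4 * b%:Z - K - 2 -> e2 = 4 * a%:Z - K - 2 ->
  (s ^ 2 - s ^ (-2)) * \sum_(a <= i < b) F i = s ^ e1 - s ^ e2.
Proof.
move=> s0 hab hF -> ->.
elim: b hab hF => [|b IH] hab hF.
  have -> : a = 0%N by lia.
  by rewrite big_geq // mulr0 subrr.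
case: (leqP a b) => hab'; last first.
  have -> : a = b.+1 by lia.
  by rewrite big_geq // mulr0 subrr.
rewrite big_nat_recr //= mulrDr IH //; last by move=> i hi; apply: hF; lia.
rewrite hF; last by lia.
rewrite mulrBl -!expfzDr //.
have -> : (2 + (4 * b%:Z - K) = 4 * b.+1%:Z - K - 2) by lia.
have -> : (-2 + (4 * b%:Z - K) = 4 * b%:Z - K - 2) by lia.
ring.
Qed.

Lemma rho_sym eps N g : (eps = 1 \/ eps = -1) -> (eps = -1 -> ~~ odd N) -> (g < N)%N ->
  rho2 eps N (N - g.+1).+1 = - rho2 eps N g.+1.
Proof.
move=> heps hodd hg; rewrite /rho2.
have hN := odd_double_half N; move: hN.
case: heps => ?; subst eps => /=.
  case: (odd N) => /= hN; repeat case: ifP; lia.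
have := hodd erefl; case: (odd N) => //= _ hN; repeat case: ifP; lia.
Qed.

Lemma epsi_sym eps N g : (eps = 1 \/ eps = -1) -> (eps = -1 -> ~~ odd N) -> (g < N)%N ->
  epsi eps N (N - g.+1).+1 * epsi eps N g.+1 = eps.
Proof.
move=> heps hodd hg; rewrite /epsi.
have hN := odd_double_half N; move: hN.
case: heps => ?; subst eps => //=.
have := hodd erefl; case: (odd N) => //= _ hN; repeat case: ifP; lia.
Qed.

Lemma tsum_eq (C : numClosedFieldType) (q : C) eps N :
  (eps = 1 \/ eps = -1) -> (eps = -1 -> ~~ odd N) ->
  tsum q eps N = eps%:~R * \sum_(1 <= i < N.+1) sqrtC q ^ (- rho2 eps N i - rho2 eps N i).
Proof.
move=> heps hodd.
rewrite big_add1 /= big_mkord mulr_sumr; apply: eq_bigr => g _.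
rewrite /fco /qrho /= rho_sym // -mulrA -intrM epsi_sym //; ring.
Qed.

Section Val.
Variables (C : numClosedFieldType) (q : C) (eps : int) (N : nat).
Hypotheses (heps : eps = 1 \/ eps = -1) (hodd : eps = -1 -> ~~ odd N)
  (hN2 : (2 <= N)%N) (q0 : 0 < q).
Local Notation s := (sqrtC q).
Local Notation F := (fun i => s ^ (- rho2 eps N i - rho2 eps N i)).

Lemma s0 : s != 0. Proof. by rewrite sqrtC_eq0 gt_eqF. Qed.

Lemma keyA : eps = 1 -> odd N ->
  (s ^ 2 - s ^ (-2)) * \sum_(1 <= i < N.+1) F i
  = eps%:~R * (s ^ 2 - s ^ (-2)) + (s ^ (2 * (N%:Z - eps)) - s ^ (2 * (- (N%:Z - eps)))).
Proof.
move=> e1 ho.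
have hN := odd_double_half N; rewrite ho /= in hN.
have [n hn] : exists n, N./2 = n by eauto.
rewrite hn in hN.
rewrite (@big_cat_nat _ _ _ n.+1) //=; last lia.
rewrite (@big_cat_nat _ _ _ n.+2 n.+1 N.+1) //=; last lia.
rewrite big_nat1 mulrDr [X in _ + X = _]mulrDr.
rewrite (@geoE _ s 1 n.+1 (4 * n%:Z + 2) 0 (- (4 * n%:Z))) ?s0 //; first last.
- lia.
- lia.
- move=> i hi; congr (_ ^ _); rewrite /rho2 /= e1 ho hn /=; repeat case: ifP; lia.
rewrite (@geoE _ s n.+2 N.+1 (4 * n%:Z + 6) (4 * n%:Z) 0) ?s0 //; first last.
- lia.
- lia.
- move=> i hi; congr (_ ^ _); rewrite /rho2 /= e1 ho hn /=; repeat case: ifP; lia.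
- lia.
have -> : - rho2 eps N n.+1 - rho2 eps N n.+1 = 0.
  rewrite /rho2 /= e1 ho hn /=; repeat case: ifP; lia.
have -> : 2 * (N%:Z - eps) = 4 * n%:Z by rewrite e1; lia.
have -> : 2 * (- (N%:Z - eps)) = - (4 * n%:Z) by rewrite e1; lia.
rewrite e1 expr0z; ring.
Qed.

Lemma keyB : ~~ odd N ->
  (s ^ 2 - s ^ (-2)) * \sum_(1 <= i < N.+1) F i
  = eps%:~R * (s ^ 2 - s ^ (-2)) + (s ^ (2 * (N%:Z - eps)) - s ^ (2 * (- (N%:Z - eps)))).
Proof.
move=> ho.
have hN := odd_double_half N; rewrite (negbTE ho) /= in hN.
have [n hn] : exists n, N./2 = n by eauto.
rewrite hn in hN.
rewrite (@big_cat_nat _ _ _ n.+1) //=; last lia.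
rewrite mulrDr.
case: heps => e1.
  rewrite (@geoE _ s 1 n.+1 (4 * n%:Z) 2 (2 - 4 * n%:Z)) ?s0 //; first last.
  - lia.
  - lia.
  - move=> i hi; congr (_ ^ _); rewrite /rho2 /= e1 (negbTE ho) hn /=; repeat case: ifP; lia.
  rewrite (@geoE _ s n.+1 N.+1 (4 * n%:Z + 4) (4 * n%:Z - 2) (-2)) ?s0 //; first last.
  - lia.
  - lia.
  - move=> i hi; congr (_ ^ _); rewrite /rho2 /= e1 (negbTE ho) hn /=; repeat case: ifP; lia.
  - lia.
  have -> : 2 * (N%:Z - eps) = 4 * n%:Z - 2 by rewrite e1; lia.
  have -> : 2 * (- (N%:Z - eps)) = 2 - 4 * n%:Z by rewrite e1; lia.
  rewrite e1; ring.
rewrite (@geoE _ s 1 n.+1 (4 * n%:Z + 4) (-2) (- (4 * n%:Z) - 2)) ?s0 //; first last.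
- lia.
- lia.
- move=> i hi; congr (_ ^ _); rewrite /rho2 /= e1 (negbTE ho) hn /=; repeat case: ifP; lia.
rewrite (@geoE _ s n.+1 N.+1 (4 * n%:Z) (4 * n%:Z + 2) 2) ?s0 //; first last.
- lia.
- lia.
- move=> i hi; congr (_ ^ _); rewrite /rho2 /= e1 (negbTE ho) hn /=; repeat case: ifP; lia.
- lia.
have -> : 2 * (N%:Z - eps) = 4 * n%:Z + 2 by rewrite e1; lia.
have -> : 2 * (- (N%:Z - eps)) = - (4 * n%:Z) - 2 by rewrite e1; lia.
rewrite e1; ring.
Qed.

Lemma Dnz : q != 1 -> q - q^-1 != 0.
Proof.
move=> q1; apply/negP => /eqP h.
have qn0 : q != 0 by rewrite gt_eqF.
have hqq : q * q = 1 by move/eqP: h; rewrite subr_eq0 => /eqP {2}->; rewrite divff.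
have : (q - 1) * (q + 1) = 0 by rewrite mulrDr mulrBl hqq; ring.
move/eqP; rewrite mulf_eq0 => /orP [/eqP|/eqP] h2.
  by move/eqP: q1; apply; apply/eqP; rewrite -subr_eq0 h2.
have : 0 < q + 1 by rewrite addr_gt0 ?ltr01.
by rewrite h2 ltxx.
Qed.

Lemma tsum_val : tsum q eps N = 1 + eps%:~R * qnum q (N%:Z - eps).
Proof.
rewrite tsum_eq // /qnum; case: ifP => [/eqP q1 | /negbT q1].
  rewrite q1 sqrtC1; under eq_big_nat => i _ do rewrite exp1rz.
  rewrite sumr_const_nat subn1 /= intrD.
  change ((N%:Z)%:~R : C) with (N%:R : C).
  have i1 : ((1:int)%:~R : C) = 1 by [].
  by case: heps => ->; rewrite ?intrN i1; ring.
have qx : forall z, q ^ z = s ^ (2 * z).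
  by move=> z; rewrite -exprz_exp; change (s ^ (2:int)) with (s ^+ 2); rewrite sqrtCK.
have hD : q - q^-1 = s ^ 2 - s ^ (-2).
  by rewrite -invr_expz; change (s ^ (2:int)) with (s ^+ 2); rewrite sqrtCK.
have Dn := Dnz q1; rewrite hD in Dn.
have Hk : (s ^ 2 - s ^ (-2)) * \sum_(1 <= i < N.+1) F i
  = eps%:~R * (s ^ 2 - s ^ (-2)) + (s ^ (2 * (N%:Z - eps)) - s ^ (2 * (- (N%:Z - eps)))).
  case ho : (odd N); last by apply: keyB; rewrite ho.
  case: heps => e1; first exact: keyA.
  by move: (hodd e1); rewrite ho.
rewrite !qx hD; apply: (mulfI Dn).
have i1 : ((1:int)%:~R : C) = 1 by [].
move: Hk Dn; move: (s ^ 2 - s ^ (-2)) (s ^ (2 * (N%:Z - eps))) (s ^ (2 * (- (N%:Z - eps)))) => D A B Hk Dn.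
rewrite mulrCA Hk.
by case: heps => ->; rewrite ?intrN i1; field.
Qed.
End Val.
Unset Implicit Arguments.

Theorem mainTheorem6 (C : numClosedFieldType) (eps : int) (N : nat) (q : C) :
  (eps = 1 \/ eps = -1) ->
  (2 <= N)%N ->
  (eps = -1 -> ~~ odd N) ->
  0 < q ->
  1 + eps%:~R * qnum q (N%:Z - eps) != 0 ->
  let d := dcoef q eps N in
  4 * d ^+ 2 < 1 ->
  let wp := (-1 + sqrtC (1 - 4 * d ^+ 2)) / (2 * d ^+ 2) in
  let wm := (-1 - sqrtC (1 - 4 * d ^+ 2)) / (2 * d ^+ 2) in
  let R := Rhat q eps N in
  [/\ op12 (R wp) *m op23 (R wp) *m op12 (R wp)
        = op23 (R wp) *m op12 (R wp) *m op23 (R wp),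
      op12 (R wm) *m op23 (R wm) *m op12 (R wm)
        = op23 (R wm) *m op12 (R wm) *m op23 (R wm),
      R wp *m R wm = 1%:M
    & forall w : C, R w = (wp - wm)^-1 *: ((w - wm) *: R wp - (w - wp) *: R wm)].
Proof.
move=> heps hN2 hodd q0 hnz d H4.
set r := sqrtC (1 - 4 * d ^+ 2).
move=> wp wm R.
have dnz : d != 0 by rewrite /d /dcoef invr_eq0.
have hdt : d * tsum q eps N = 1 by rewrite (tsum_val heps hodd hN2 q0) /d /dcoef mulVf.
have PPe : P0 q eps N *m P0 q eps N = P0 q eps N by rewrite PP // hdt scale1r.
have hr : r ^+ 2 = 1 - 4 * d ^+ 2 by rewrite sqrtCK.
have rnz : r != 0.
  by rewrite sqrtC_eq0 subr_eq0 eq_sym lt_eqF.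
have two : (2 : C) != 0 by rewrite pnatr_eq0.
have four : (4 : C) != 0 by rewrite pnatr_eq0.
have quad : forall w, (w = wp \/ w = wm) -> w * w * w * (d * d) + w + w * w = 0.
  move=> w [->|->].
    have -> : wp * wp * wp * (d * d) + wp + wp * wp = wp * ((r ^+ 2 - (1 - 4 * d ^+ 2)) / (4 * d ^+ 2)).
      by rewrite /wp; field.
    by rewrite hr subrr mul0r mulr0.
  have -> : wm * wm * wm * (d * d) + wm + wm * wm = wm * ((r ^+ 2 - (1 - 4 * d ^+ 2)) / (4 * d ^+ 2)).
    by rewrite /wm; field.
  by rewrite hr subrr mul0r mulr0.
have braid : forall w, (w = wp \/ w = wm) ->
    op12 (R w) *m op23 (R w) *m op12 (R w) = op23 (R w) *m op12 (R w) *m op23 (R w).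
  move=> w hw; rewrite /R /Rhat op12L op23L.
  have h11 : op12 (P0 q eps N) *m op12 (P0 q eps N) = op12 (P0 q eps N) by rewrite -op12M PPe.
  have h22 : op23 (P0 q eps N) *m op23 (P0 q eps N) = op23 (P0 q eps N) by rewrite -op23M PPe.
  rewrite (braid_half h11 (TL1 eps N q0) (quad w hw)).
  rewrite (braid_half h22 (TL2 eps N q0) (quad w hw)).
  by rewrite [op23 _ + _]addrC [op23 _ *m _ + _]addrC.
split.
- by apply: braid; left.
- by apply: braid; right.
- rewrite /R /Rhat.
  have hsum : wp + wm + wp * wm = 0.
    have -> : wp + wm + wp * wm = ((1 - 4 * d ^+ 2) - r ^+ 2) / (4 * d ^+ 4).
      by rewrite /wp /wm; field.
    by rewrite hr subrr mul0r.
  move: PPe; move: (P0 q eps N) => P PPe.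
  rewrite !mulmxDl !mulmxDr !mul1mx !mulmx1 -!scalemxAl -!scalemxAr !scalerA PPe.
  apply/matrixP => i j; rewrite !mxE.
  rewrite -[RHS]addr0 -(mulr0 (P i j)) -hsum; ring.
- move=> w.
  have hdiff : wp - wm = r / d ^+ 2 by rewrite /wp /wm; field.
  have dn : wp - wm != 0 by rewrite hdiff mulf_neq0 // invr_eq0 expf_neq0.
  rewrite /R /Rhat; move: (P0 q eps N) => P; apply/matrixP => i j; rewrite !mxE.
  by field.
Qed.
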